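(* Let $A$ be a commutative unital ring, let $R$ be a positive totally ordered aura with tempered growth, and let $|\cdot|:A\to R$ be a power-multiplicative generalized seminorm. Then $|\cdot|$ is pre-archimedean, i.e. $$|a+b|\leq \max(|2|,1)\cdot\max(|a|,|b|)\quad\text{for all }a,b\in A,$$ where $2=1+1\in A$. If moreover $|2|>1$, then the restriction $|\cdot|_{|\mathbb{Z}}$ (the composite $\mathbb{Z}\to A\xrightarrow{|\cdot|}R$ of the canonical ring map with $|\cdot|$) is multiplicatively equivalent to the archimedean seminorm $|\cdot|_\infty:\mathbb{Z}\to\mathbb{Q}_{+}$, $|n|_\infty=\max(n,-n)$.
   Context: All semirings are commutative and unital. A halo is a semiring with a partial order $\leq$ compatible with its operations: $x\leq z$ and $y\leq t$ imply $xy\leq zt$ and $x+y\leq z+t$. A halo morphism $f:A\to B$ is an increasing map with $f(0)=0$, $f(1)=1$, $f(a+b)\leq f(a)+f(b)$ and $f(ab)\leq f(a)f(b)$. A ring is regarded as a halo with the trivial (equality) order. An aura is a halo whose underlying semiring is a semifield; it is positive if $0<1$. For $n\in\mathbb{N}$, $n$ also denotes $1+\dots+1$ ($n$ times) in any semiring. A halo $R$ has tempered growth if for every non-zero polynomial $P\in\mathbb{N}[X]$ and every $x\in R$, ($x^n\leq P(n)$ in $R$ for all $n\in\mathbb{N}$) implies $x\leq 1$. A generalized seminorm on a ring $A$ is a halo morphism $|\cdot|:A\to R$ into a positive totally ordered aura $R$; it is power-multiplicative if $|a^n|=|a|^n$ for all $a\in A$, $n\in\mathbb{N}$. The set $\mathbb{Q}_+$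 of non-negative rationals with usual operations and order is a positive totally ordered aura. Given halo morphisms $|\cdot|_1:A\to R$, $|\cdot|_2:A\to S$, write $|\cdot|_1\leq_m|\cdot|_2$ if for all $a,b,c\in A$, $|a|_2|c|_2\leq|b|_2$ implies $|a|_1|c|_1\leq|b|_1$; they are multiplicatively equivalent if $|\cdot|_1\leq_m|\cdot|_2$ and $|\cdot|_2\leq_m|\cdot|_1$. *)

(* Defs.v *)
From HB Require Import structures.
From mathcomp Require Import all_boot all_order all_algebra.
Set Implicit Arguments. Unset Strict Implicit. Unset Printing Implicit Defensive.
Import Order.TTheory GRing.Theory Num.Theory.
Local Open Scope ring_scope.

Definition halo_order (R : comPzSemiRingType) (le : rel R) : Prop :=
  [/\ (forall x, le x x),
      (forall x y, le x y -> le y x -> x = y),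
      (forall x y z, le x y -> le y z -> le x z),
      (forall x y z t, le x z -> le y t -> le (x + y) (z + t)) &
      (forall x y z t, le x z -> le y t -> le (x * y) (z * t))].

Definition lt_of (R : Type) (le : rel R) (x y : R) : Prop := le x y /\ x <> y.

Definition is_semifield (R : comPzSemiRingType) : Prop :=
  (0 : R) <> 1 /\ forall x : R, x <> 0 -> exists y, x * y = 1.

Definition pos_tot_aura (R : comPzSemiRingType) (le : rel R) : Prop :=
  [/\ halo_order le, is_semifield R,
      (forall x y, le x y \/ le y x) & lt_of le 0 1].

Definition maxo (R : Type) (le : rel R) (x y : R) : R := if le x y then y else x.

(* tempered growth; polynomials in N[X] are {poly nat}, P(n) is evaluated in N
   and then mapped to R by the canonical semiring map n |-> 1+...+1 *)
Definition tempered_growth (R : comPzSemiRingType) (le : rel R) : Prop :=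
  forall (P : {poly nat}) (x : R), P != 0 ->
    (forall n : nat, le (x ^+ n) ((P.[n])%:R)) -> le x 1.

(* halo morphism from a ring A (trivial order, so monotonicity is automatic) *)
Definition halo_morphism_ring (A : comPzRingType) (R : comPzSemiRingType)
  (le : rel R) (f : A -> R) : Prop :=
  [/\ f 0 = 0, f 1 = 1,
      (forall a b, le (f (a + b)) (f a + f b)) &
      (forall a b, le (f (a * b)) (f a * f b))].

Definition gen_seminorm (A : comPzRingType) (R : comPzSemiRingType)
  (le : rel R) (f : A -> R) : Prop :=
  pos_tot_aura le /\ halo_morphism_ring le f.

Definition power_mult (A : comPzRingType) (R : comPzSemiRingType) (f : A -> R) : Prop :=
  forall (a : A) (n : nat), f (a ^+ n) = f a ^+ n.

Definition mult_le (A : Type) (R S : comPzSemiRingType) (leR : rel R) (leS : rel S)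
  (f1 : A -> R) (f2 : A -> S) : Prop :=
  forall a b c : A, leS (f2 a * f2 c) (f2 b) -> leR (f1 a * f1 c) (f1 b).

Definition mult_equiv (A : Type) (R S : comPzSemiRingType) (leR : rel R) (leS : rel S)
  (f1 : A -> R) (f2 : A -> S) : Prop :=
  mult_le leR leS f1 f2 /\ mult_le leS leR f2 f1.

Definition abs_infty (n : int) : rat := (Num.max n (- n))%:~R.

Definition rat_le : rel rat := fun x y => x <= y.

(* Main.v *)
Require Import Defs.
From HB Require Import structures.
From mathcomp Require Import all_boot all_order all_algebra.
From mathcomp Require Import zify ring.
Import Order.TTheory GRing.Theory Num.Theory.
Local Open Scope ring_scope.

Lemma L_refl {R : comPzSemiRingType} {le : rel R} : pos_tot_aura le -> forall x, le x x.
Proof. by case=> -[]. Qed.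
Lemma L_anti {R : comPzSemiRingType} {le : rel R} : pos_tot_aura le -> forall x y, le x y -> le y x -> x = y.
Proof. by case=> -[]. Qed.
Lemma L_trans {R : comPzSemiRingType} {le : rel R} : pos_tot_aura le -> forall x y z, le x y -> le y z -> le x z.
Proof. by case=> -[]. Qed.
Lemma L_add {R : comPzSemiRingType} {le : rel R} : pos_tot_aura le -> forall x y z t, le x z -> le y t -> le (x + y) (z + t).
Proof. by case=> -[]. Qed.
Lemma L_mul {R : comPzSemiRingType} {le : rel R} : pos_tot_aura le -> forall x y z t, le x z -> le y t -> le (x * y) (z * t).
Proof. by case=> -[]. Qed.
Lemma L_tot {R : comPzSemiRingType} {le : rel R} : pos_tot_aura le -> forall x y, le x y \/ le y x.
Proof. by case. Qed.
Lemma L_01 {R : comPzSemiRingType} {le : rel R} : pos_tot_aura le -> le 0 1.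
Proof. by case=> _ _ _ []. Qed.
Lemma L_0ne1 {R : comPzSemiRingType} {le : rel R} : pos_tot_aura le -> (0 : R) <> 1.
Proof. by case=> _ []. Qed.
Lemma L_inv {R : comPzSemiRingType} {le : rel R} : pos_tot_aura le -> forall x : R, x <> 0 -> exists y, x * y = 1.
Proof. by case=> _ []. Qed.

Arguments L_mul {R le} h {x y z t}.
Arguments L_add {R le} h {x y z t}.
Arguments L_trans {R le} h {x y z}.
Arguments L_anti {R le} h {x y}.

Lemma L_ge0 {R : comPzSemiRingType} {le : rel R} (h : pos_tot_aura le) x : le 0 x.
Proof.
have := L_mul h (L_refl h x) (L_01 h). by rewrite mulr0 mulr1.
Qed.

Lemma L_addr {R : comPzSemiRingType} {le : rel R} (h : pos_tot_aura le) x y : le x (x + y).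
Proof. have := L_add h (L_refl h x) (L_ge0 h y). by rewrite addr0. Qed.

Lemma L_mull {R : comPzSemiRingType} {le : rel R} (h : pos_tot_aura le) x y t :
  le y t -> le (x * y) (x * t).
Proof. move=> H; have := L_mul h (L_refl h x) H. done. Qed.

Lemma L_mulr {R : comPzSemiRingType} {le : rel R} (h : pos_tot_aura le) x y t :
  le y t -> le (y * x) (t * x).
Proof. move=> H; have := L_mul h H (L_refl h x). done. Qed.

Arguments L_mull {R le} h x {y t}.
Arguments L_mulr {R le} h x {y t}.

Lemma L_exp {R : comPzSemiRingType} {le : rel R} (h : pos_tot_aura le) x y n :
  le x y -> le (x ^+ n) (y ^+ n).
Proof.
move=> H; elim: n => [|n IH]; first by rewrite !expr0 L_refl.
by rewrite !exprS; apply: L_mul.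
Qed.

Arguments L_exp {R le} h {x y} n.

Lemma L_one_exp {R : comPzSemiRingType} {le : rel R} (h : pos_tot_aura le) x n :
  le 1 x -> le 1 (x ^+ n).
Proof. by move=> H; have := L_exp h n H; rewrite expr1n. Qed.

Lemma L_exp_mono {R : comPzSemiRingType} {le : rel R} (h : pos_tot_aura le) x m n :
  le 1 x -> (m <= n)%N -> le (x ^+ m) (x ^+ n).
Proof.
move=> H /subnK <-; rewrite exprD.
have := L_mull h (x ^+ m) ((@L_one_exp _ _ h x (n - m)%N H)).
by rewrite mulr1 mulrC.
Qed.

Lemma L_nat {R : comPzSemiRingType} {le : rel R} (h : pos_tot_aura le) m n :
  (m <= n)%N -> le m%:R n%:R.
Proof. by move=> /subnK <-; rewrite natrD addrC L_addr. Qed.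

Lemma L_sum {R : comPzSemiRingType} {le : rel R} (h : pos_tot_aura le) k (F : 'I_k -> R) Y :
  (forall i, le (F i) Y) -> le (\sum_(i < k) F i) (k%:R * Y).
Proof.
elim: k F => [|k IH] F HF; first by rewrite big_ord0 mul0r L_refl.
rewrite big_ord_recr /= mulr_natl mulrSr -mulr_natl.
by apply: L_add => //; apply: IH.
Qed.

Lemma L_neq0 {R : comPzSemiRingType} {le : rel R} (h : pos_tot_aura le) (x y : R) :
  x <> 0 -> y <> 0 -> x * y <> 0.
Proof.
move=> hx hy hxy; have [x' hx'] := L_inv h x hx; have [y' hy'] := L_inv h y hy.
apply: (L_0ne1 h).
have : x * y * (x' * y') = 1 by rewrite mulrACA hx' hy' mulr1.
by rewrite hxy mul0r.
Qed.

Lemma L_cancel {R : comPzSemiRingType} {le : rel R} (h : pos_tot_aura le) (x y z : R) :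
  z <> 0 -> le (x * z) (y * z) -> le x y.
Proof.
move=> hz H; have [z' hz'] := L_inv h z hz.
have := L_mulr h z' H. by rewrite -!mulrA hz' !mulr1.
Qed.

Lemma L_1le_neq0 {R : comPzSemiRingType} {le : rel R} (h : pos_tot_aura le) (x : R) :
  le 1 x -> x <> 0.
Proof. move=> H hx; rewrite hx in H; apply: (L_0ne1 h); by have := L_anti h (L_01 h) H. Qed.

Lemma L_tempered {R : comPzSemiRingType} {le : rel R} (h : pos_tot_aura le) :
  tempered_growth le -> forall (x y : R) (K : nat), y <> 0 ->
  (forall j : nat, le (x ^+ j) ((K.+1 * j.+1 * j.+1)%N%:R * y ^+ j)) -> le x y.
Proof.
move=> ht x y K hy H; have [y' hy'] := L_inv h y hy.
pose P : {poly nat} := K.+1%:P * ('X + 1) * ('X + 1).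
have HP : forall j : nat, P.[j] = (K.+1 * j.+1 * j.+1)%N.
  move=> j; rewrite /P !hornerM hornerD hornerX !hornerC. change ((K.+1 * (j + 1) * (j + 1))%N = (K.+1 * j.+1 * j.+1)%N). by rewrite !addn1.
have HP0 : P != 0.
  by apply/eqP => P0; have := HP 0%N; rewrite P0 horner0.
have Hz := ht P (x * y') HP0.
have : le (x * y') 1.
  apply: Hz => j; rewrite HP exprMn.
  have := L_mulr h (y' ^+ j) (H j).
  by rewrite -mulrA -(exprMn j y y') hy' expr1n mulr1.
move=> /(L_mulr h y). by rewrite mul1r -mulrA (mulrC y') hy' mulr1.
Qed.

Lemma maxo_l {R : comPzSemiRingType} {le : rel R} (h : pos_tot_aura le) x y : le x (maxo le x y).
Proof. rewrite /maxo; case: ifP => // _; exact: L_refl. Qed.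
Lemma maxo_r {R : comPzSemiRingType} {le : rel R} (h : pos_tot_aura le) x y : le y (maxo le x y).
Proof.
rewrite /maxo; case: ifP => [_|/negbT H]; first exact: L_refl.
by case: (L_tot h x y) => // H'; rewrite H' in H.
Qed.
Lemma maxo_lub {R : comPzSemiRingType} {le : rel R} x y z : le x z -> le y z -> le (maxo le x y) z.
Proof. by rewrite /maxo; case: ifP. Qed.


Lemma F_nat {A : comPzRingType} {R : comPzSemiRingType} {le : rel R} (h : pos_tot_aura le)
  (f : A -> R) (hf : halo_morphism_ring le f) (n : nat) : le (f n%:R) n%:R.
Proof.
case: hf => f0 f1 fD fM.
elim: n => [|n IH]; first by rewrite f0 L_refl.
rewrite -addn1 !natrD; apply: (L_trans h (fD _ _)).
by rewrite f1; exact: (L_add h IH (L_refl h 1)).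
Qed.

Lemma F_sum {A : comPzRingType} {R : comPzSemiRingType} {le : rel R} (h : pos_tot_aura le)
  (f : A -> R) (hf : halo_morphism_ring le f) k (G : 'I_k -> A) :
  le (f (\sum_(i < k) G i)) (\sum_(i < k) f (G i)).
Proof.
case: hf => f0 f1 fD fM.
elim: k G => [|k IH] G; first by rewrite !big_ord0 f0 L_refl.
rewrite !big_ord_recr /=; apply: (L_trans h (fD _ _)).
exact: (L_add h (IH _) (L_refl h _)).
Qed.

Lemma F_muln {A : comPzRingType} {R : comPzSemiRingType} {le : rel R}
  (f : A -> R) (hf : halo_morphism_ring le f) (x : A) n :
  le (f (x *+ n)) (f x * f n%:R).
Proof. by case: hf => _ _ _ fM; rewrite -[x *+ n]mulr_natr; exact (fM _ _). Qed.

Lemma F_digits {A : comPzRingType} {R : comPzSemiRingType} {le : rel R} (h : pos_tot_aura le)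
  (f : A -> R) (hf : halo_morphism_ring le f) (b : nat) : (0 < b)%N ->
  forall k m : nat, (m < b ^ k)%N ->
  le (f m%:R) ((k * b)%N%:R * maxo le (f b%:R) 1 ^+ k).
Proof.
move=> b0; set C := maxo le (f b%:R) 1.
have C1 : le 1 C by apply: maxo_r.
have Cb : le (f b%:R) C by apply: maxo_l.
have hf' := hf; case: hf' => f0 f1 fD fM.
elim=> [|k IH] m.
  by rewrite expn0 ltnS leqn0 => /eqP ->; rewrite f0 L_ge0.
rewrite expnSr => hm.
have hq : (m %/ b < b ^ k)%N by rewrite ltn_divLR.
have hr : (m %% b < b)%N by rewrite ltn_mod.
rewrite {1}(divn_eq m b) natrD natrM.
apply: (L_trans h (fD _ _)).
rewrite mulSnr natrD mulrDl.
refine (L_add h _ _).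
  apply: (L_trans h (fM _ _)).
  rewrite exprSr mulrA.
  exact: (L_mul h (IH _ hq) Cb).
apply: (L_trans h (F_nat h f hf (m %% b)%N)).
apply: (L_trans h (L_nat h _ _ (ltnW hr))).
have := L_mull h (b%:R) (L_one_exp h C (k.+1) C1).
by rewrite mulr1.
Qed.

Lemma binlt (n i : nat) : ('C(n, i) < 2 ^ n.+1)%N.
Proof.
have : ('C(n, i) <= 2 ^ n)%N.
  elim: n i => [|n IH] [|i] //; first by rewrite bin0 expn_gt0.
  by rewrite binS expnS mul2n -addnn leq_add.
move/leq_ltn_trans; apply; rewrite expnS mul2n -addnn -[X in (X < _)%N]addn0 ltn_add2l expn_gt0.
done.
Qed.

Lemma part1 {A : comPzRingType} {R : comPzSemiRingType} {le : rel R} (h : pos_tot_aura le)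
  (ht : tempered_growth le) (f : A -> R) (hf : halo_morphism_ring le f) (pm : power_mult f)
  (x y : A) :
  le (f (x + y)) (maxo le (f 2%:R) 1 * maxo le (f x) (f y)).
Proof.
set C := maxo le (f 2%:R) 1; set M := maxo le (f x) (f y).
have C1 : le 1 C by apply: maxo_r.
have C2 : le C 2%:R by apply: maxo_lub; [exact: (F_nat h f hf 2) | exact: (L_nat h 1 2)].
have hf' := hf; case: hf' => f0 f1 fD fM.
have xM : le (f x) M by apply: maxo_l.
have yM : le (f y) M by apply: maxo_r.
case: (eqVneq M 0) => [M0|M0].
  rewrite M0 mulr0 in xM yM *.
  have fx0 : f x = 0 by apply: (L_anti h xM (L_ge0 h _)).
  have fy0 : f y = 0 by apply: (L_anti h yM (L_ge0 h _)).
  by have := fD x y; rewrite fx0 fy0 addr0.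
have M0' : M <> 0 by apply/eqP.
refine (L_tempered h ht _ _ 3 (L_neq0 h _ _ (L_1le_neq0 h C C1) M0') _).
move=> j; rewrite -pm exprDn.
apply: (L_trans h (F_sum h f hf _ _)).
rewrite [X in le _ X](_ : _ = j.+1%:R * ((j.+1 * 2 * 2)%N%:R * (C * M) ^+ j)); last first.
  by rewrite mulrA -natrM; congr (_%:R * _); lia.
apply: (L_sum h) => i.
apply: (L_trans h (F_muln f hf _ _)).
have hi : (i <= j)%N by rewrite -ltnS ltn_ord.
have T1 : le (f (x ^+ (j - i) * y ^+ i)) (M ^+ j).
  apply: (L_trans h (fM _ _)); rewrite !pm.
  have -> : M ^+ j = M ^+ (j - i) * M ^+ i by rewrite -exprD subnK.
  exact: (L_mul h (L_exp h _ xM) (L_exp h _ yM)).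
have T2 : le (f 'C(j, i)%:R) ((j.+1 * 2)%N%:R * (2%:R * C ^+ j)).
  have TT := F_digits h f hf 2 (isT : (0 < 2)%N) j.+1 _ (binlt j i). apply: (L_trans h TT).
  rewrite -/C exprS; apply: (L_mull h); exact: (L_mulr h _ C2).
have := L_mul h T1 T2.
by rewrite (_ : M ^+ j * ((j.+1 * 2)%N%:R * (2 * C ^+ j)) = (j.+1 * 2 * 2)%N%:R * (C * M) ^+ j) // exprMn !natrM; ring.
Qed.


Lemma leq_expr (m n j : nat) : (m <= n)%N -> (m ^ j <= n ^ j)%N.
Proof. by case: j => [|j] // H; rewrite leq_exp2r. Qed.

Lemma F_pnat {A : comPzRingType} {R : comPzSemiRingType} (f : A -> R) (pm : power_mult f)
  (m j : nat) : f (m ^ j)%N%:R = f m%:R ^+ j.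
Proof. by rewrite natrX pm. Qed.

Lemma P2a {A : comPzRingType} {R : comPzSemiRingType} {le : rel R} (h : pos_tot_aura le)
  (ht : tempered_growth le) (f : A -> R) (hf : halo_morphism_ring le f) (pm : power_mult f)
  (m n : nat) : (2 <= n)%N -> (m <= n)%N -> le (f m%:R) (maxo le (f n%:R) 1).
Proof.
move=> n2 mn; set C := maxo le (f n%:R) 1.
have C1 : le 1 C by apply: maxo_r.
have Cn : le C n%:R.
  apply: maxo_lub; [exact: (F_nat h f hf n) | exact: (L_nat h 1 n (ltnW n2))].
refine (L_tempered h ht _ _ (n * n) (L_1le_neq0 h C C1) _) => j.
rewrite -F_pnat //.
have hj : (m ^ j < n ^ j.+1)%N.
  apply: (leq_ltn_trans (leq_expr _ _ j mn)); by rewrite ltn_exp2l.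
apply: (L_trans h (F_digits h f hf n (ltnW n2) j.+1 _ hj)).
rewrite -/C exprS mulrA.
apply: (L_trans h (L_mulr h _ (L_mull h _ Cn))).
rewrite -natrM; apply: (L_mulr h); apply: (L_nat h); nia.
Qed.

Lemma lt_of_1 {R : comPzSemiRingType} {le : rel R} (h : pos_tot_aura le) (x : R) :
  lt_of le 1 x -> ~ le x 1.
Proof. by case=> H1 Hne H2; apply: Hne; apply: (L_anti h H1 H2). Qed.

Lemma P2max {A : comPzRingType} {R : comPzSemiRingType} {le : rel R} (h : pos_tot_aura le)
  (ht : tempered_growth le) (f : A -> R) (hf : halo_morphism_ring le f) (pm : power_mult f)
  (h2 : lt_of le 1 (f 2%:R)) (n : nat) : (2 <= n)%N ->
  maxo le (f n%:R) 1 = f n%:R /\ ~ le (f n%:R) 1.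
Proof.
move=> n2; have H := P2a h ht f hf pm 2 n n2 n2.
rewrite /maxo in H *; case Hn: (le (f n%:R) 1) H => H.
  by exfalso; exact: (lt_of_1 h _ h2 H).
by split.
Qed.

Lemma Mono {A : comPzRingType} {R : comPzSemiRingType} {le : rel R} (h : pos_tot_aura le)
  (ht : tempered_growth le) (f : A -> R) (hf : halo_morphism_ring le f) (pm : power_mult f)
  (h2 : lt_of le 1 (f 2%:R)) (m n : nat) : (m <= n)%N -> le (f m%:R) (f n%:R).
Proof.
have hf' := hf; case: hf' => f0 f1 fD fM.
move=> mn; case: (leqP 2 n) => n2.
  by have := P2a h ht f hf pm m n n2 mn; case: (P2max h ht f hf pm h2 n n2) => -> _.
case: m mn => [|m] mn; first by rewrite f0 L_ge0.
case: n mn n2 => [|[|n]] // mn _.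
case: m mn => // _; exact: L_refl.
Qed.

Lemma One {A : comPzRingType} {R : comPzSemiRingType} {le : rel R} (h : pos_tot_aura le)
  (ht : tempered_growth le) (f : A -> R) (hf : halo_morphism_ring le f) (pm : power_mult f)
  (h2 : lt_of le 1 (f 2%:R)) (n : nat) : (1 <= n)%N -> le 1 (f n%:R).
Proof.
move=> n1; have := Mono h ht f hf pm h2 1 n n1.
by case: hf => _ f1 _ _; rewrite f1.
Qed.

Lemma Mult {A : comPzRingType} {R : comPzSemiRingType} {le : rel R} (h : pos_tot_aura le)
  (ht : tempered_growth le) (f : A -> R) (hf : halo_morphism_ring le f) (pm : power_mult f)
  (h2 : lt_of le 1 (f 2%:R)) (m n : nat) : f (m * n)%N%:R = f m%:R * f n%:R.
Proof.
have hf' := hf; case: hf' => f0 f1 fD fM.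
case: m => [|m]; first by rewrite mul0n f0 mul0r.
case: n => [|n]; first by rewrite muln0 f0 mulr0.
apply: (L_anti h); first by rewrite natrM; exact: fM.
have hmn : (0 < m.+1 * n.+1)%N by rewrite muln_gt0.
refine (L_tempered h ht _ _ 3 (L_1le_neq0 h _ (One h ht f hf pm h2 _ hmn)) _) => j.
have /andP[em1 em2] := trunc_log_bounds (isT : (1 < 2)%N) (expn_gt0 m.+1 j).
have /andP[en1 en2] := trunc_log_bounds (isT : (1 < 2)%N) (expn_gt0 n.+1 j).
set e := trunc_log 2 (m.+1 ^ j) in em1 em2.
set e' := trunc_log 2 (n.+1 ^ j) in en1 en2.
have Mono' := Mono h ht f hf pm h2.
have T1 : le ((f m.+1%:R * f n.+1%:R) ^+ j) (f 2%:R ^+ 2 * f 2%:R ^+ (e + e')).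
  rewrite exprMn (_ : f 2%:R ^+ 2 * f 2%:R ^+ (e + e') = f 2%:R ^+ e.+1 * f 2%:R ^+ e'.+1);
    last by rewrite -!exprD; congr (_ ^+ _); lia.
  rewrite -!F_pnat //.
  exact: (L_mul h (Mono' _ _ (ltnW em2)) (Mono' _ _ (ltnW en2))).
apply: (L_trans h T1).
have T2 : le (f 2%:R ^+ (e + e')) (f (m.+1 * n.+1)%N%:R ^+ j).
  rewrite -!F_pnat //; apply: Mono'.
  by rewrite expnD expnMn leq_mul.
have T3 : le (f 2%:R ^+ 2) (4 * j.+1 * j.+1)%N%:R.
  apply: (L_trans h (L_exp h 2 (F_nat h f hf 2))).
  rewrite -natrX; apply: (L_nat h); nia.
exact: (L_mul h T3 T2).
Qed.

Lemma nat_pow_gap (m : nat) : (0 < m)%N -> (2 * m ^ m <= (m.+1) ^ m)%N.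
Proof.
move=> m0.
have H : forall j, (m ^ j * (m + j) <= (m.+1) ^ j * m)%N.
  elim=> [|j IH]; first by rewrite !expn0 addn0 !mul1n.
  rewrite !expnS; move: IH; set a := (m ^ j)%N; set b := (m.+1 ^ j)%N => IH.
  have H2 : (a * (m + j) * m.+1 <= b * m * m.+1)%N by rewrite leq_mul2r IH orbT.
  have -> : (m.+1 * b * m = b * m * m.+1)%N by lia.
  apply: leq_trans H2.
  have -> : (m * a * (m + j.+1) = a * (m * m + m * j + m))%N by lia.
  have -> : (a * (m + j) * m.+1 = a * (m * m + m * j + m + j))%N by lia.
  by rewrite leq_mul2l leq_addr orbT.
have := H m; rewrite addnn -mul2n => Hm.
rewrite -(leq_pmul2r m0). by rewrite (_ : (2 * m ^ m * m = m ^ m * (2 * m))%N) //; lia.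
Qed.

Lemma Strict {A : comPzRingType} {R : comPzSemiRingType} {le : rel R} (h : pos_tot_aura le)
  (ht : tempered_growth le) (f : A -> R) (hf : halo_morphism_ring le f) (pm : power_mult f)
  (h2 : lt_of le 1 (f 2%:R)) (m n : nat) : (m < n)%N -> ~ le (f n%:R) (f m%:R).
Proof.
have hf' := hf; case: hf' => f0 f1 fD fM.
move=> mn H.
have n1 : (0 < n)%N by apply: leq_ltn_trans mn.
have On := One h ht f hf pm h2 n n1.
case: m mn H => [|m] mn H.
  rewrite f0 in H; apply: (L_0ne1 h); exact: (L_anti h (L_01 h) (L_trans h On H)).
have Hg := nat_pow_gap m.+1 (isT : (0 < m.+1)%N).
have Hg2 : (2 * m.+1 ^ m.+1 <= n ^ m.+1)%N by apply: (leq_trans Hg); apply: leq_expr.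
have K := Mono h ht f hf pm h2 _ _ Hg2.
rewrite (Mult h ht f hf pm h2) !F_pnat // in K.
have K2 := L_trans h K (L_exp h m.+1 H).
have X1 := L_one_exp h _ m.+1 (One h ht f hf pm h2 m.+1 (isT : (0 < m.+1)%N)).
have K3 : le (f 2%:R * f m.+1%:R ^+ m.+1) (1 * f m.+1%:R ^+ m.+1) by rewrite mul1r.
have := L_cancel h _ _ _ (L_1le_neq0 h _ X1) K3.
exact: (lt_of_1 h _ h2).
Qed.

Lemma fneg {A : comPzRingType} {R : comPzSemiRingType} {le : rel R} (h : pos_tot_aura le)
  (f : A -> R) (hf : halo_morphism_ring le f) (pm : power_mult f) (x : A) : f (- x) = f x.
Proof.
have hf' := hf; case: hf' => f0 f1 fD fM.
have u2 : f (-1) ^+ 2 = 1 by rewrite -pm sqrrN expr1n f1.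
have u1 : f (-1) = 1.
  rewrite expr2 in u2; case: (L_tot h (f (-1)) 1) => H.
    apply: (L_anti h H); have := L_mull h (f (-1)) H; by rewrite u2 mulr1.
  apply: (L_anti h _ H); have := L_mull h (f (-1)) H; by rewrite u2 mulr1.
apply: (L_anti h).
  by have := fM (-1) x; rewrite u1 mul1r mulN1r.
by have := fM (-1) (- x); rewrite u1 mul1r mulN1r opprK.
Qed.

Lemma int_f {A : comPzRingType} {R : comPzSemiRingType} {le : rel R} (h : pos_tot_aura le)
  (f : A -> R) (hf : halo_morphism_ring le f) (pm : power_mult f) (n : int) :
  f n%:~R = f (`|n|%N)%:R.
Proof. by case: n => k //; rewrite NegzE mulrNz (fneg h f hf pm). Qed.

Lemma abs_inftyE (n : int) : abs_infty n = (`|n|%N)%:R.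
Proof. by rewrite /abs_infty maxrN -abszE. Qed.

Theorem theorem2p8 (A : comPzRingType) (R : comPzSemiRingType) (le : rel R)
  (f : A -> R) :
  pos_tot_aura le -> tempered_growth le ->
  gen_seminorm le f -> power_mult f ->
  (forall a b : A,
     le (f (a + b)) (maxo le (f 2%:R) 1 * maxo le (f a) (f b))) /\
  (lt_of le 1 (f 2%:R) ->
     mult_equiv le rat_le (fun n : int => f (n%:~R)) abs_infty).
Proof.
move=> h ht [_ hf] pm; split.
  by move=> a b; apply: (part1 h ht f hf pm).
move=> h2; split => a b c /=; rewrite !(int_f h f hf pm) !abs_inftyE /rat_le -natrM ler_nat.
  by move=> H; rewrite -(Mult h ht f hf pm h2); apply: (Mono h ht f hf pm h2).
move=> H; case: leqP => // lt; exfalso.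
by apply: (Strict h ht f hf pm h2 _ _ lt); rewrite (Mult h ht f hf pm h2).
Qed.
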